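(* Let $0<\theta<1$, let $\rho,\tau$ be positive integers with $\rho\le\tau$, and let $m=2^\beta$ for some $\beta\in\mathbb{N}=\{0,1,2,\dots\}$. Then $$L_m^{\rho/\tau}(\theta)=\int_{-\infty}^{\infty}\ell_m^{\rho/\tau}(\varepsilon)\,f_\theta(\varepsilon)\,d\varepsilon = 1+\lg m+\frac{1}{2}\,\frac{\theta^{m/2}}{1-\theta^{m/2}}\left(\theta^{\frac{\rho}{2\tau}}+\theta^{-\frac{\rho}{2\tau}}\right).$$
   Context: $\lg$ denotes $\log_2$. The Laplace density with parameter $\theta\in(0,1)$ is $f_\theta(\varepsilon)=-\frac{\ln\theta}{2}\theta^{|\varepsilon|}$, $\varepsilon\in\mathbb{R}$. The generalized Rice mapping $M:\mathbb{R}\to\mathbb{Z}_{\ge0}$ is $M(\varepsilon)=\lfloor 2\varepsilon\rfloor$ if $\varepsilon\ge 0$ and $M(\varepsilon)=-\lfloor 2\varepsilon\rfloor-1$ if $\varepsilon<0$. For a positive integer $m$, the Golomb codeword of a non-negative integer $N$ consists of $j=\lfloor N/m\rfloor$ in unary ($j+1$ bits) followed by $k=N \bmod m$ in minimal binary, which uses $\lfloor\lg m\rfloor$ bits if $k<2^{\lceil\lg m\rceil}-m$ and $\lceil\lg m\rceil$ bits otherwise; let $\lambda_m(N)$ be the total number of bits. The (finest-precision) code length of a real residual $\varepsilon$ is $\ell_m(\varepsilon)=\lambda_m(M(\varepsilon))$. For positive integers $\rho\le\tau$ (precision $\rho/\tau$), the code length assigned to the real residual $\varepsilon$ at precision $\rho/\tau$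 is modeled as the finest-precision assignment shifted left by $\rho/(2\tau)$: $\ell_m^{\rho/\tau}(\varepsilon)=\ell_m(\varepsilon+\rho/(2\tau))$. $L_m^{\rho/\tau}(\theta)$ denotes the average code length under the Laplace density, as in the claim. *)

(* Defs.v *)
From HB Require Import structures.
From mathcomp Require Import all_boot all_order all_algebra.
From mathcomp Require Import all_classical all_reals all_analysis.
Set Implicit Arguments. Unset Strict Implicit. Unset Printing Implicit Defensive.
Import Order.TTheory GRing.Theory Num.Theory.
Local Open Scope ring_scope.

Definition lg {R : realType} (x : R) : R := ln x / ln 2.

Definition laplace {R : realType} (theta e : R) : R :=
  - ln theta / 2 * theta `^ `|e|.

Definition rice_map {R : realType} (e : R) : nat :=
  if 0 <= e then `|Num.floor (2 * e)|%N
  else `|- Num.floor (2 * e) - 1|%N.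

(* Golomb codeword length lambda_m(N): unary part (j+1 bits) plus minimal
   binary part; floor(lg m) = trunc_log 2 m, ceil(lg m) = up_log 2 m. *)
Definition golomb_len (m N : nat) : nat :=
  let j := (N %/ m)%N in
  let k := (N %% m)%N in
  (j.+1 + (if (k < 2 ^ up_log 2 m - m)%N then trunc_log 2 m else up_log 2 m))%N.

Definition code_len {R : realType} (m : nat) (e : R) : R :=
  (golomb_len m (rice_map e))%:R.

Definition code_len_prec {R : realType} (m rho tau : nat) (e : R) : R :=
  code_len m (e + rho%:R / (2 * tau%:R)).

Definition avg_code_len {R : realType} (m rho tau : nat) (theta : R) : \bar R :=
  (\int[@lebesgue_measure R]_(e in [set: R])
     (code_len_prec m rho tau e * laplace theta e)%:E)%E.

(* Main.v *)
Require Import Defs.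
From HB Require Import structures.
From mathcomp Require Import all_boot all_order all_algebra.
From mathcomp Require Import all_classical all_reals all_analysis measurable_realfun.
From mathcomp Require Import zify ring lra.
Import Order.TTheory GRing.Theory Num.Theory.
Local Open Scope ring_scope.
Import numFieldNormedType.Exports.
Local Open Scope classical_set_scope.


Lemma golomb_pow2 b N : golomb_len (2 ^ b) N = (N %/ 2 ^ b + 1 + b)%N.
Proof.
rewrite /golomb_len trunc_expnK // up_expnK // subnn ltn0. lia.
Qed.

Lemma rice_ge (R : realType) (x : R) (K : nat) : (0 < K)%N ->
  (K <= rice_map x)%N = (K%:R <= 2 * x) || (2 * x < - K%:R).
Proof.
move=> K0; rewrite /rice_map; case: ifPn => x0.
- have f0 : (0 <= Num.floor (2 * x))%R by rewrite floor_ge0 mulr_ge0.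
  have -> : (K <= `|Num.floor (2 * x)|)%N = (K%:Z <= Num.floor (2 * x))%R.
    by apply/idP/idP; lia.
  rewrite floor_ge_int.
  have -> : (2 * x < - K%:R) = false.
    apply/negbTE; rewrite -leNgt (le_trans _ (mulr_ge0 _ x0)) //.
  by rewrite orbF.
- have {}x0 : x < 0 by rewrite ltNge.
  have f0 : (Num.floor (2 * x) < 0)%R.
    by rewrite floor_lt_int /= pmulr_rlt0.
  have -> : (K <= `|- Num.floor (2 * x) - 1|)%N = (Num.floor (2 * x) < - K%:Z)%R.
    by apply/idP/idP; lia.
  rewrite floor_lt_int.
  have -> : (K%:R <= 2 * x) = false.
    apply/negbTE; rewrite -ltNge (@lt_trans _ _ 0)// ?ltr0n// //.
    by rewrite pmulr_rlt0.
  by rewrite /= intrN.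
Qed.

Section S.
Variable R : realType.

Lemma is_derive_expM (L x : R) :
  is_derive x 1 (fun y => expR (L * y)) (expR (L * x) * L).
Proof.
apply: (@is_derive1_comp R expR ( *%R L)).
have := @is_deriveZ R R R id L x 1 1 (is_derive_id _ _).
by rewrite /GRing.scale /= mulr1.
Qed.

Lemma laplaceE (theta e : R) : 0 < theta ->
  laplace theta e = - ln theta / 2 * expR (ln theta * `|e|).
Proof.
move=> t0; by rewrite /laplace /powR gt_eqF // [_ * ln _]mulrC.
Qed.

Lemma laplace_ge0 (theta e : R) : 0 < theta -> theta < 1 -> 0 <= laplace theta e.
Proof.
move=> t0 t1; rewrite laplaceE //; apply: mulr_ge0; last exact: expR_ge0.
have : ln theta < 0 by rewrite ln_lt0 // t0.
lra.
Qed.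

Lemma laplace_cont (theta : R) : 0 < theta -> continuous (fun x : R => laplace theta x).
Proof.
move=> t0; rewrite (_ : (fun x => laplace theta x) = fun e => - ln theta / 2 * expR (ln theta * `|e|)); last first.
  by apply/funext => e; rewrite laplaceE.
move=> x; apply: cvgM; first exact: cvg_cst.
apply: (@continuous_comp _ _ _ (fun e => ln theta * `|e|) expR); last exact: continuous_expR.
apply: cvgM; first exact: cvg_cst.
exact: norm_continuous.
Qed.


Lemma is_derive_F (L k x : R) :
  is_derive x 1 (fun y => k * expR (L * y)) (k * (expR (L * x) * L)).
Proof. exact: (is_deriveZ k (is_derive_expM L x)). Qed.

Lemma cvg_expM (L : R) : L < 0 -> expR (L * x) @[x --> +oo] --> 0.
Proof.
move=> L0.
have g : (fun x => - L * x) @ +oo --> +oo.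
  apply/cvgryPge => A; near=> x.
  rewrite -ler_pdivrMl ?oppr_gt0 //.
have := cvg_comp _ _ g (@cvgr_expR R).
by rewrite /comp; under eq_fun do rewrite mulNr opprK.
Unshelve. all: by end_near.
Qed.

Lemma laplace_right (theta c : R) : 0 < theta -> theta < 1 -> 0 <= c ->
  (\int[@lebesgue_measure R]_(x in `[c, +oo[) (laplace theta x)%:E
    = (expR (ln theta * c) / 2)%:E)%E.
Proof.
move=> t0 t1 c0.
set L := ln theta.
have L0 : L < 0 by rewrite ln_lt0 // t0.
rewrite (@ge0_continuous_FTC2y R (laplace theta)
  (fun x => (- 2^-1) * expR (L * x)) c 0).
- by rewrite sub0e -EFinN mulNr opprK mulrC.
- by move=> x _; exact: laplace_ge0.
- apply: continuous_subspaceT => x; exact: laplace_cont.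
- rewrite [X in _ --> X](_ : 0 = (- 2^-1) * 0); last by rewrite mulr0.
  apply: cvgM; first exact: cvg_cst.
  exact: cvg_expM.
- move=> x _; have h := is_derive_F L (-2^-1) x; exact: ex_derive.
- apply: cvg_at_right_filter.
  apply: cvgM; first exact: cvg_cst.
  apply: (@continuous_comp _ _ _ (fun e => L * e) expR); last exact: continuous_expR.
  apply: cvgM; [exact: cvg_cst | exact: cvg_id].
- move=> x; rewrite in_itv /= andbT => cx.
  have h := is_derive_F L (-2^-1) x.
  rewrite derive1E derive_val laplaceE // ger0_norm.
    rewrite -/L; ring.
  by rewrite (le_trans c0) // ltW.
Qed.


Lemma laplace_mfun (theta : R) (D : set R) : 0 < theta ->
  measurable_fun D (EFin \o laplace theta).
Proof.
move=> t0; apply/measurable_EFinP; apply: measurable_funTS.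
apply: continuous_measurable_fun => x; exact: laplace_cont.
Qed.

Lemma laplace_left (theta c : R) : 0 < theta -> theta < 1 -> 0 <= c ->
  (\int[@lebesgue_measure R]_(x in `]-oo, (- c)%R[) (laplace theta x)%:E
    = (expR (ln theta * c) / 2)%:E)%E.
Proof.
move=> t0 t1 c0.
rewrite integral_itv_bndo_bndc; last exact: laplace_mfun.
rewrite ge0_integration_by_substitutionNy.
- rewrite -laplace_right //; apply: eq_integral => x _.
  by rewrite /comp /laplace normrN.
- apply: continuous_subspaceT => x; exact: laplace_cont.
- by move=> x _; exact: laplace_ge0.
Qed.


Lemma two_rays (theta c1 c2 : R) : 0 < theta -> theta < 1 -> 0 <= c1 -> 0 <= c2 ->
  (\int[@lebesgue_measure R]_(x in `[c1, +oo[ `|` `]-oo, (- c2)%R[) (laplace theta x)%:E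
    = ((expR (ln theta * c1) + expR (ln theta * c2)) / 2)%:E)%E.
Proof.
move=> t0 t1 c10 c20.
rewrite ge0_integral_setU //.
- by rewrite laplace_right // laplace_left // -EFinD mulrDl.
- exact: laplace_mfun.
- by move=> x _; rewrite lee_fin; exact: laplace_ge0.
- apply/disj_set2P; rewrite -subset0 => x [] /=; rewrite !in_itv /= andbT => h1 h2.
  have : c1 <= x by [].
  have : x < - c2 by [].
  lra.
Qed.


Definition w (beta m j N : nat) : R :=
  if j == 0%N then (1 + beta)%:R else ((j * m <= N)%N : nat)%:R.

Lemma w_ge0 beta m j N : 0 <= w beta m j N.
Proof. by rewrite /w; case: ifP. Qed.

Lemma pointwise (theta s e : R) (beta : nat) : 0 < theta -> theta < 1 ->
  ((code_len (2 ^ beta) (e + s) * laplace theta e)%:E =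
  \sum_(j <oo) (w beta (2 ^ beta) j (rice_map (e + s)) * laplace theta e)%:E)%E.
Proof.
move=> t0 t1.
rewrite /code_len golomb_pow2.
set N := rice_map (e + s); set m := (2 ^ beta)%N; set q := (N %/ m)%N.
have m0 : (0 < m)%N by rewrite expn_gt0.
have f0 : 0 <= laplace theta e by exact: laplace_ge0.
rewrite (nneseries_split 0 q.+1); last first.
  by move=> k _; rewrite lee_fin mulr_ge0 // w_ge0.
rewrite add0n eseries0 ?adde0; last first.
  move=> i qi _; rewrite /w; case: ifP => [/eqP i0|_]; first by subst i.
  have -> : (i * m <= N)%N = false.
    apply/negbTE; rewrite -ltnNge -ltn_divLR //.
  by rewrite mul0r.
rewrite big_nat_recl // sumEFin -EFinD.
rewrite (@eq_big_nat _ _ _ 0 q _ (fun _ => laplace theta e)); last first.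
  move=> i /andP[_ iq]; rewrite /w /=.
  have -> : (i.+1 * m <= N)%N.
    by rewrite (leq_trans _ (leq_trunc_div N m)) // leq_mul2r iq orbT.
  by rewrite mul1r.
rewrite sumr_const_nat subn0 /w /=; congr EFin.
rewrite !natrD; rewrite -mulr_natl; ring.
Qed.

Lemma u_patch (theta s : R) (K : nat) : (0 < K)%N ->
  (fun x => (((K <= rice_map (x + s))%N : nat)%:R * laplace theta x)%:E) =
  ((fun x => (laplace theta x)%:E) \_ (`[K%:R / 2 - s, +oo[ `|` `]-oo, (- (K%:R / 2 + s))%R[)).
Proof.
move=> K0; apply/funext => x; rewrite /patch rice_ge // in_setU !mem_setE !in_itv /= andbT.
have -> : (K%:R / 2 - s <= x) || (x < - (K%:R / 2 + s)) =
          (K%:R <= 2 * (x + s)) || (2 * (x + s) < - K%:R).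
  by apply/idP/idP => /orP[] h; apply/orP; [left|right|left|right]; lra.
by case: ifP; rewrite ?mul1r ?mul0r.
Qed.

Lemma mes_u (theta s : R) beta j : 0 < theta ->
  measurable_fun setT (fun x : R => (w beta (2 ^ beta) j (rice_map (x + s)) * laplace theta x)%:E).
Proof.
move=> t0; case: j => [|j].
  rewrite /w /=; apply/measurable_EFinP; apply: measurable_funM.
    exact: measurable_cst.
  by apply/measurable_EFinP; exact: laplace_mfun.
rewrite /w /= (@u_patch theta s (j.+1 * 2 ^ beta)%N); last by rewrite muln_gt0 expn_gt0.
set A := (X in _ \_ X).
have mA : measurable A by apply: measurableU; exact: measurable_itv.
have := (measurable_restrictT (fun x => (laplace theta x)%:E) mA).1.
apply; exact: laplace_mfun.
Qed.

Definition v (theta s : R) (beta j : nat) : R :=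
  if j == 0%N then (1 + beta)%:R
  else (expR (ln theta * ((j * 2 ^ beta)%:R / 2 - s))
        + expR (ln theta * ((j * 2 ^ beta)%:R / 2 + s))) / 2.

Lemma int_u (theta s : R) beta j : 0 < theta -> theta < 1 -> 0 <= s -> s <= 1/2 ->
  (\int[@lebesgue_measure R]_(x in setT)
     (w beta (2 ^ beta) j (rice_map (x + s)) * laplace theta x)%:E = (v theta s beta j)%:E)%E.
Proof.
move=> t0 t1 s0 s1; case: j => [|j].
{ rewrite /w /v /=.
  under eq_integral do rewrite EFinM.
  rewrite ge0_integralZl_EFin //; last 2 first.
  - by move=> x _; rewrite lee_fin; exact: laplace_ge0.
  - exact: laplace_mfun.
  rewrite (_ : setT = `[0, +oo[ `|` `]-oo, (- 0)%R[); last first.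
    apply/seteqP; split => x //= _; rewrite /= !in_itv /= andbT oppr0.
    by case: (leP 0 x) => h; [left|right].
  rewrite two_rays // mulr0 expR0 -EFinM; congr EFin.
  rewrite (_ : (1 + 1) / 2 = 1 :> R) ?mulr1 //; lra. }
rewrite /w /v /= (@u_patch theta s (j.+1 * 2 ^ beta)%N); last by rewrite muln_gt0 expn_gt0.
have : (1 <= (j.+1 * 2 ^ beta)%N)%N by rewrite muln_gt0 expn_gt0.
rewrite -(ler_nat R) => h.
by rewrite -integral_mkcond two_rays //; lra.
Qed.

Lemma v_geo (theta s : R) beta j : (0 < j)%N ->
  v theta s beta j = (expR (- (ln theta * s)) + expR (ln theta * s)) / 2
                     * expR (ln theta * ((2 ^ beta)%:R / 2)) ^+ j.
Proof.
case: j => // j _; rewrite /v /= natrM.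
rewrite (_ : ln theta * (j.+1%:R * (2 ^ beta)%:R / 2 - s) =
  j.+1%:R * (ln theta * ((2 ^ beta)%:R / 2)) + - (ln theta * s)); last by ring.
rewrite (_ : ln theta * (j.+1%:R * (2 ^ beta)%:R / 2 + s) =
  j.+1%:R * (ln theta * ((2 ^ beta)%:R / 2)) + (ln theta * s)); last by ring.
rewrite !expRD !expRM_natl; ring.
Qed.

Lemma series_v (theta s : R) beta : 0 < theta -> theta < 1 ->
  let C := (expR (- (ln theta * s)) + expR (ln theta * s)) / 2 in
  let r := expR (ln theta * ((2 ^ beta)%:R / 2)) in
  (\sum_(j <oo) (v theta s beta j)%:E = (1 + beta%:R - C + C / (1 - r))%:E)%E.
Proof.
move=> t0 t1 C r.
have L0 : ln theta < 0 by rewrite ln_lt0 // t0.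
have r0 : 0 < r by exact: expR_gt0.
have r1 : r < 1.
  rewrite /r expR_lt1.
  have : 0 < (2 ^ beta)%:R / 2 :> R by rewrite divr_gt0 // ltr0n expn_gt0.
  nra.
rewrite (_ : (\sum_(j <oo) (v theta s beta j)%:E)%E = limn (EFin \o series (v theta s beta))); last first.
  by apply: congr_lim; apply/funext => n; rewrite /= sumEFin.
have cv : series (v theta s beta) @ \oo --> (1 + beta%:R - C + C / (1 - r)).
  rewrite -cvg_shiftS.
  have E n : series (v theta s beta) n.+1 = (1 + beta%:R - C) + series (geometric C r) n.+1.
    rewrite /series /= big_nat_recl // [in RHS]big_nat_recl //.
    rewrite (@eq_big_nat _ _ _ 0 n _ (fun i => geometric C r i.+1)); last first.
      by move=> i _; rewrite v_geo.
    rewrite /v /geometric /= expr0 mulr1 natrD; ring.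
  rewrite (_ : [sequence series (v theta s beta) n.+1]_n =
     (fun n => (1 + beta%:R - C) + series (geometric C r) n.+1)); last first.
    by apply/funext => n; rewrite /= E.
  apply: cvgD; first exact: cvg_cst.
  have := @cvg_geometric_series R C r.
  rewrite ger0_norm ?ltW // => /(_ r1).
  by rewrite -cvg_shiftS.
rewrite EFin_lim; last by apply/cvg_ex; eexists; exact: cv.
by rewrite (cvg_lim _ cv).
Qed.

End S.
Arguments w {R}.
Arguments v {R}.

Theorem theorem1 (R : realType) (theta : R) (rho tau beta : nat)
  (htheta0 : 0 < theta) (htheta1 : theta < 1)
  (hrho : (0 < rho)%N) (htau : (0 < tau)%N) (hrt : (rho <= tau)%N) :
  let m := (2 ^ beta)%N in
  avg_code_len m rho tau theta =
  (1 + lg (m%:R : R)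
   + 1 / 2 * (theta `^ (m%:R / 2) / (1 - theta `^ (m%:R / 2)))
     * (theta `^ (rho%:R / (2 * tau%:R)) + theta `^ (- (rho%:R / (2 * tau%:R)))))%:E.
Proof.
move=> m.
set s := rho%:R / (2 * tau%:R) : R.
have s0 : 0 <= s by rewrite /s divr_ge0.
have s1 : s <= 1 / 2.
  have t0' : (0:R) < tau%:R by rewrite ltr0n.
  have hrt' : (rho%:R : R) <= tau%:R by rewrite ler_nat.
  have : s * (2 * tau%:R) = rho%:R.
    by rewrite /s divfK // mulf_neq0 // pnatr_eq0 -lt0n.
  nra.
rewrite /avg_code_len.
transitivity (\int[@lebesgue_measure R]_(x in setT)
  (\sum_(j <oo) (w beta m j (rice_map (x + s)) * laplace theta x)%:E))%E.
  by apply: eq_integral => x _; rewrite /code_len_prec -/s; exact: pointwise.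
rewrite integral_nneseries //; last 2 first.
- by move=> n; exact: mes_u.
- by move=> n x _; rewrite lee_fin; apply: mulr_ge0; [exact: w_ge0 | exact: laplace_ge0].
rewrite (eq_eseriesr (g := fun j => (v theta s beta j)%:E)); last first.
  by move=> j _; exact: int_u.
rewrite series_v //; congr EFin.
have ln2 : 0 < ln (2 : R) by rewrite ln_gt0 // ltr1n.
have -> : lg (m%:R : R) = beta%:R.
  by rewrite /lg /m natrX lnXn // mulrnAl divff ?gt_eqF.
set L := ln theta.
have L0 : L < 0 by rewrite ln_lt0 // htheta0.
rewrite /powR gt_eqF // -/L.
set r := expR (L * ((2 ^ beta)%:R / 2)).
have r1 : r < 1.
  rewrite /r expR_lt1.
  have : 0 < (2 ^ beta)%:R / 2 :> R by rewrite divr_gt0 // ltr0n expn_gt0.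
  nra.
rewrite (mulrC (m%:R / 2)) -/r (mulrC s) (mulrC (- s)) mulrN.
have : 1 - r != 0 by rewrite subr_eq0 gt_eqF.
move=> hr; field; by rewrite hr.
Qed.
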